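(* Let $n\ge 2$, let $T=\{1,\dots,n\}$ and let $\mathcal T$ be a topology on $T$. Fix an integer $k\ge 1$. Let $A,R\subseteq T\setminus\{n\}$ be disjoint sets such that every point of $A$ is old (at stage $k$), every point of $R$ is new (at stage $k$), and $A\cup R\cup\{n\}$ is a new lower $k$-system of $\mathcal T$. Then at least one of the two sets $A$ or $A\cup\{n\}$ is open in $\mathcal T$.
   Context: For $\alpha\in T$, $\alpha^{*}$ (the covering set of $\alpha$) denotes the smallest open set of $\mathcal T$ containing $\alpha$. For an integer $m\ge 0$, an $m$-system is an open set $P$ of $\mathcal T$ such that $P\setminus\{n\}$ has exactly $m$ points; it is upper if $n\notin P$ and lower if $n\in P$. For fixed $k$, a point $\alpha\neq n$ is called old if $\alpha^{*}$ is an $m$-system for some $m<k$, and new if $\alpha^{*}$ is a $k$-system. A $k$-system is called new if it contains at least one point $p\neq n$ that is not contained in any $m$-system with $m\le k-1$. *)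

(* Defs.v *)
From mathcomp Require Import all_boot.
Set Implicit Arguments. Unset Strict Implicit. Unset Printing Implicit Defensive.

(* Points of T = {1,...,n} are encoded as 'I_n.-1.+1 (which has n elements
   when n >= 1): the ordinal i represents the point i+1.  The distinguished
   point n is therefore [ord_max], whose value is n-1. *)
Definition pt (n : nat) := 'I_n.-1.+1.

Definition top_pt (n : nat) : pt n := ord_max.

Definition is_topology (T : finType) (tau : {set {set T}}) : Prop :=
  [/\ set0 \in tau, setT \in tau,
      (forall U V, U \in tau -> V \in tau -> U :|: V \in tau) &
      (forall U V, U \in tau -> V \in tau -> U :&: V \in tau)].

(* covering set alpha^* : the intersection of all open sets containing alpha
   (the smallest open set containing alpha, since T is finite). *)
Definition cover (T : finType) (tau : {set {set T}}) (a : T) : {set T} :=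
  \bigcap_(U in tau | a \in U) U.

Definition msystem (n : nat) (tau : {set {set pt n}}) (m : nat) (P : {set pt n}) : Prop :=
  P \in tau /\ #|P :\ top_pt n| = m.

Definition upper_msystem n tau m (P : {set pt n}) : Prop :=
  msystem tau m P /\ top_pt n \notin P.

Definition lower_msystem n tau m (P : {set pt n}) : Prop :=
  msystem tau m P /\ top_pt n \in P.

Definition old_pt n (tau : {set {set pt n}}) (k : nat) (a : pt n) : Prop :=
  a != top_pt n /\ exists m, m < k /\ msystem tau m (cover tau a).

Definition new_pt n (tau : {set {set pt n}}) (k : nat) (a : pt n) : Prop :=
  a != top_pt n /\ msystem tau k (cover tau a).

Definition new_ksystem n (tau : {set {set pt n}}) (k : nat) (P : {set pt n}) : Prop :=
  msystem tau k P /\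
  exists p, [/\ p \in P, p != top_pt n &
    forall m Q, m <= k - 1 -> msystem tau m Q -> p \notin Q].

(* Main.v *)
Require Import Defs.
From mathcomp Require Import all_boot.

Lemma cover_mem (T : finType) (tau : {set {set T}}) a : a \in Defs.cover tau a.
Proof. by apply/bigcapP => U /andP[_ ->]. Qed.

Lemma cover_min {T : finType} {tau : {set {set T}}} {a U} :
  U \in tau -> a \in U -> Defs.cover tau a \subset U.
Proof. by move=> HU Ha; apply: bigcap_inf; rewrite HU Ha. Qed.

Theorem lemma3 (n : nat) (hn : 2 <= n) (tau : {set {set pt n}})
  (htop : is_topology tau) (k : nat) (hk : 1 <= k) (A R : {set pt n})
  (hA : top_pt n \notin A) (hR : top_pt n \notin R) (hAR : [disjoint A & R])
  (hold : forall a, a \in A -> old_pt tau k a)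
  (hnew : forall r, r \in R -> new_pt tau k r)
  (hsys : new_ksystem tau k (A :|: R :|: [set top_pt n]) /\
          lower_msystem tau k (A :|: R :|: [set top_pt n])) :
  A \in tau \/ top_pt n |: A \in tau.
Proof.
case: htop => h0 hT hU hI.
case: hsys => _ [[HP _] _].
set U := \bigcup_(a in A) Defs.cover tau a.
have UT : U \in tau.
  rewrite /U; elim/big_rec: _ => [|i X Hi HX] //; apply: hU => //.
  by case: (hold i Hi) => _ [m [_ []]].
have UA : A \subset U.
  by apply/subsetP => a Ha; apply/bigcupP; exists a => //; apply: cover_mem.
have US : U \subset top_pt n |: A.
  apply/bigcupsP => a Ha; apply/subsetP => x Hx.
  case: (hold a Ha) => _ [m [Hm [Hca Hcard]]].
  have : x \in A :|: R :|: [set top_pt n].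
    have HaP : a \in A :|: R :|: [set top_pt n] by rewrite !inE Ha.
    exact: (subsetP (cover_min (a:=a) HP HaP)).
  rewrite !inE => /orP[/orP[->|xR]|->]; rewrite ?orbT //.
  case: (hnew x xR) => _ [_ Hk].
  have sub : Defs.cover tau x \subset Defs.cover tau a by apply: (cover_min (a:=x)).
  have : #|Defs.cover tau x :\ top_pt n| <= #|Defs.cover tau a :\ top_pt n|.
    by apply: subset_leq_card; apply: setSD.
  by rewrite Hk Hcard leqNgt Hm.
case: (boolP (top_pt n \in U)) => Htop.
  right; suff <- : U = top_pt n |: A by [].
  by apply/eqP; rewrite eqEsubset US /= subUset sub1set Htop UA.
left; suff <- : U = A by [].
apply/eqP; rewrite eqEsubset UA andbT; apply/subsetP => x Hx.
move: (subsetP US x Hx); rewrite !inE => /orP[/eqP Ex|] //.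
by move: Htop; rewrite -Ex Hx.
Qed.
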